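(* Let $p$ be a prime and $b$ an integer with $0<b<p$. If $S^G_{1,b}$ is generated by 4 invariants (i.e. $|\mathrm{inv}_{1,b}|=4$, so $R=\mathbb{C}[y_0,y_1,y_2,y_3]$), then $$\ker\varphi_{1,b}=\langle\, y_1^{p-b^{-1}}-y_0y_2,\ \ y_2^{p-b}-y_1y_3,\ \ y_1^{p-b^{-1}-1}y_2^{p-b-1}-y_0y_3\,\rangle.$$
   Context: Let $S=\mathbb{C}[x_1,x_2]$ (standard grading), $\zeta=e^{2\pi i/p}$, $G=\mathbb{Z}/p\mathbb{Z}=\langle\zeta\rangle$ acting on $S$ by $x_1\mapsto\zeta x_1$, $x_2\mapsto\zeta^bx_2$, with invariant ring $S^G_{1,b}$ (spanned by monomials $x_1^cx_2^d$ with $c+bd\equiv0\pmod p$). $\mathrm{inv}_{1,b}$ denotes the minimal set of monomial generators of $S^G_{1,b}$ as a $\mathbb{C}$-algebra: the nonconstant invariant monomials that are not a product of two nonconstant invariant monomials. Writing $\mathrm{inv}_{1,b}=\{z_0,\dots,z_n\}$ in lexicographic order with $x_1>x_2$ (i.e. in decreasing order of the exponent of $x_1$), $R=\mathbb{C}[y_0,\dots,y_n]$ with $\deg y_i=\deg z_i$, and $\varphi_{1,b}:R\to S^G_{1,b}$ is the $\mathbb{C}$-algebra map $y_i\mapsto z_i$. $b^{-1}$ is the unique integer $0<b^{-1}<p$ with $bb^{-1}\equiv1\pmod p$. *)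

(* Defs.v *)
From HB Require Import structures.
From mathcomp Require Import all_boot all_order all_algebra.
From mathcomp Require Import mpoly.
From mathcomp Require Import complex.
From mathcomp Require Import reals.
Set Implicit Arguments. Unset Strict Implicit. Unset Printing Implicit Defensive.
Import Order.TTheory GRing.Theory Num.Theory.
Local Open Scope ring_scope.

(* A monomial x1^c x2^d of S = C[x1,x2] is encoded by its exponent pair (c,d). *)
(* It is G-invariant (for the action x1 -> zeta x1, x2 -> zeta^b x2) iff
   c + b d = 0 mod p. *)
Definition inv_monomial (p b : nat) (m : nat * nat) : Prop :=
  (p %| m.1 + b * m.2)%N.

Definition nc_inv_monomial (p b : nat) (m : nat * nat) : Prop :=
  m <> (0%N, 0%N) /\ inv_monomial p b m.

Definition in_inv_1b (p b : nat) (m : nat * nat) : Prop :=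
  nc_inv_monomial p b m /\
  ~ (exists m1 m2, nc_inv_monomial p b m1 /\ nc_inv_monomial p b m2 /\
                   m = (m1.1 + m2.1, m1.2 + m2.2)%N).

Definition monoS (K : comRingType) (m : nat * nat) : {mpoly K[2]} :=
  'X_(inord 0) ^+ m.1 * 'X_(inord 1) ^+ m.2.

Definition yv (K : comRingType) (i : nat) : {mpoly K[4]} := 'X_(inord i).

Definition phi (K : comRingType) (z : 'I_4 -> nat * nat)
  (f : {mpoly K[4]}) : {mpoly K[2]} :=
  mmap (fun c => c%:MP) (fun i => monoS K (z i)) f.

(* Main.v *)
Require Import Defs.
From HB Require Import structures.
From mathcomp Require Import all_boot all_order all_algebra.
From mathcomp Require Import mpoly complex reals.
From mathcomp Require Import zify ring.
From Stdlib Require Import Classical.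
Import GRing.Theory.
Local Open Scope ring_scope.

Lemma nzpos {m : nat * nat} : m <> (0%N, 0%N) -> (0 < m.1 + m.2)%N.
Proof. by case: m => [[|?] [|?]]. Qed.

Lemma nc2 {p b} {m : nat * nat} : nc_inv_monomial p b m -> m.2 = 0%N -> (p <= m.1)%N.
Proof.
case: m => c d [Hn Hi] /= Hd; move: Hi Hn; rewrite /inv_monomial /= Hd muln0 addn0 => Hi Hn.
apply: dvdn_leq => //; case: c Hn Hi => //; by rewrite Hd.
Qed.

Lemma nc1 {p b} {m : nat * nat} : prime p -> (0 < b < p)%N ->
  nc_inv_monomial p b m -> m.1 = 0%N -> (p <= m.2)%N.
Proof.
move=> pp Hb; case: m => c d [Hn Hi] /= Hc; move: Hi Hn; rewrite /inv_monomial /= Hc add0n => Hi Hn.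
move: Hi; rewrite Euclid_dvdM // => /orP [Hpb|Hpd].
  by have := dvdn_leq (ltac:(lia) : (0 < b)%N) Hpb; lia.
apply: dvdn_leq => //; case: d Hn Hpd => //; by rewrite Hc.
Qed.

Lemma notinv p b (m m1 m2 : nat * nat) : nc_inv_monomial p b m1 -> nc_inv_monomial p b m2 ->
  m = (m1.1 + m2.1, m1.2 + m2.2)%N -> ~ in_inv_1b p b m.
Proof. by move=> H1 H2 E [_ []]; exists m1, m2. Qed.
Lemma ord4 (i : 'I_4) : i = inord 0 \/ i = inord 1 \/ i = inord 2 \/ i = inord 3.
Proof.
case: i => [[|[|[|[|k]]]] Hk].
- by left; apply: val_inj; rewrite /= inordK.
- by right; left; apply: val_inj; rewrite /= inordK.
- by right; right; left; apply: val_inj; rewrite /= inordK.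
- by right; right; right; apply: val_inj; rewrite /= inordK.
- by [].
Qed.
Lemma gen p b (z : 'I_4 -> nat * nat) :
  (forall m, in_inv_1b p b m <-> exists i, z i = m) ->
  forall n m, (m.1 + m.2 <= n)%N -> nc_inv_monomial p b m ->
  exists k0 k1 k2 k3 : nat,
    m = (k0 * (z (inord 0)).1 + k1 * (z (inord 1)).1 + k2 * (z (inord 2)).1 + k3 * (z (inord 3)).1,
         k0 * (z (inord 0)).2 + k1 * (z (inord 1)).2 + k2 * (z (inord 2)).2 + k3 * (z (inord 3)).2)%N.
Proof.
move=> H; elim=> [|n IH] m Hm Hnc.
  case: m Hm Hnc => [[|?] [|?]] //= _ [] //.
have [Hin|Hnin] := classic (in_inv_1b p b m).
  have [i Hi] := (H m).1 Hin.
  move: Hi; have [->|[->|[->|->]]] := ord4 i; move=> <-.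
  - by exists 1%N, 0%N, 0%N, 0%N; case: (z _) => x y /=; congr pair; lia.
  - by exists 0%N, 1%N, 0%N, 0%N; case: (z _) => x y /=; congr pair; lia.
  - by exists 0%N, 0%N, 1%N, 0%N; case: (z _) => x y /=; congr pair; lia.
  - by exists 0%N, 0%N, 0%N, 1%N; case: (z _) => x y /=; congr pair; lia.
have [m1 [m2 [H1 [H2 Hm12]]]] : exists m1 m2, nc_inv_monomial p b m1 /\ nc_inv_monomial p b m2 /\
                   m = (m1.1 + m2.1, m1.2 + m2.2)%N.
  by apply: NNPP => Hne; apply: Hnin; split.
have nz1 := nzpos (proj1 H1). have nz2 := nzpos (proj1 H2).
have [a0 [a1 [a2 [a3 Ea]]]] := IH m1 ltac:(rewrite Hm12 /= in Hm; lia) H1.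
have [c0 [c1 [c2 [c3 Ec]]]] := IH m2 ltac:(rewrite Hm12 /= in Hm; lia) H2.
exists (a0 + c0)%N, (a1 + c1)%N, (a2 + c2)%N, (a3 + c3)%N.
rewrite Hm12 Ea Ec /=; congr pair; lia.
Qed.

Lemma arith1 p u v k0 k1 k2 k3 : (1 < u)%N -> (1 < v)%N -> (u < p)%N -> (v < p)%N ->
  (p + 1 - u = k0 * p + k1 * u + k2 * 1 + k3 * 0)%N ->
  (v - 1 = k0 * 0 + k1 * 1 + k2 * v + k3 * p)%N -> (u * v = p + 1)%N.
Proof.
move=> u1 v1 up vp E1 E2.
have k2z : k2 = 0%N.
  case: k2 E1 E2 => // k2 _; rewrite mulSn; lia.
have k3z : k3 = 0%N.
  case: k3 E1 E2 => // k3 _; rewrite mulSn; lia.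
subst k2 k3; rewrite !muln0 !muln1 !addn0 add0n in E1 E2.
have k0z : k0 = 0%N.
  case: k0 E1 E2 => // k0; rewrite mulSn; lia.
subst k0 k1; rewrite mul0n add0n in E1.
have -> : v = (v - 1 + 1)%N by lia.
rewrite mulnDr muln1 mulnC -E1; lia.
Qed.

Lemma structure p b binv (z : 'I_4 -> nat * nat) :
  prime p -> (0 < b < p)%N -> (0 < binv < p)%N -> (b * binv = 1 %[mod p])%N ->
  (forall m : nat * nat, in_inv_1b p b m <-> exists i, z i = m) ->
  (forall i j : 'I_4, (i < j)%N -> ((z j).1 < (z i).1)%N) ->
  [/\ z (inord 0) = (p, 0%N), z (inord 1) = ((p - b)%N, 1%N),
      z (inord 2) = (1%N, (p - binv)%N) & z (inord 3) = (0%N, p)]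
  /\ ((p - b) * (p - binv) = p + 1)%N.
Proof.
move=> pp Hb Hbi Hmod H Hord.
have p1 := prime_gt1 pp.
set k := (b * binv %/ p)%N.
have Ek : (b * binv = k * p + 1)%N.
  by rewrite {1}(divn_eq (b * binv) p) Hmod modn_small.
have kb : (k < b)%N by timeout 15 nia.
have inz i : in_inv_1b p b (z i) by apply/H; exists i.
have ord01 : ((z (inord 1)).1 < (z (inord 0)).1)%N by apply: Hord; rewrite !inordK.
have ord12 : ((z (inord 2)).1 < (z (inord 1)).1)%N by apply: Hord; rewrite !inordK.
have ord23 : ((z (inord 3)).1 < (z (inord 2)).1)%N by apply: Hord; rewrite !inordK.
have I0 : in_inv_1b p b (p, 0%N).
  split; first split; [by case; lia | by rewrite /inv_monomial /= muln0 addn0 |].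
  move=> [m1 [m2 [H1 [H2 [E1 E2]]]]].
  have := nc2 H1; have := nc2 H2; lia.
have I3 : in_inv_1b p b (0%N, p).
  split; first split; [by case; lia | by rewrite /inv_monomial /= add0n dvdn_mull |].
  move=> [m1 [m2 [H1 [H2 [E1 E2]]]]].
  have := nc1 pp Hb H1; have := nc1 pp Hb H2; lia.
have I1 : in_inv_1b p b ((p - b)%N, 1%N).
  split; first split; [by case; lia | rewrite /inv_monomial /= muln1 subnK; [done|lia] |].
  move=> [m1 [m2 [H1 [H2 [E1 E2]]]]].
  have [h|h] : m1.2 = 0%N \/ m2.2 = 0%N by lia.
  - have := nc2 H1 h; lia.
  - have := nc2 H2 h; lia.
have I2 : in_inv_1b p b (1%N, (p - binv)%N).
  split; first split.
  - by case; lia.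
  - by rewrite /inv_monomial /=; apply/dvdnP; exists (b - k)%N; timeout 15 nia.
  move=> [m1 [m2 [H1 [H2 [E1 E2]]]]].
  have [h|h] : m1.1 = 0%N \/ m2.1 = 0%N by lia.
  - have := nc1 pp Hb H1 h; lia.
  - have := nc1 pp Hb H2 h; lia.
have L2 m : in_inv_1b p b m -> (m.1 <= p)%N.
  move=> Hm; rewrite leqNgt; apply/negP => Hlt.
  apply: (@notinv p b m (p, 0%N) ((m.1 - p)%N, m.2) (proj1 I0) _ _ Hm).
    split; first by case; lia.
    move: Hm => [[_ Hi] _]; move: Hi; rewrite /inv_monomial /=.
    have -> : (m.1 + b * m.2 = (m.1 - p + b * m.2) + p)%N by lia.
    by rewrite dvdn_addl.
  by case: m Hlt {Hm} => c d /= Hlt; congr pair; lia.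
have Z0 : z (inord 0) = (p, 0%N).
  have [i Hi] := (H _).1 I0.
  have := L2 _ (inz (inord 0)).
  move: Hi; have [->|[->|[->|->]]] := ord4 i; move=> Hi //; rewrite Hi /= in ord01 ord12 ord23 *; lia.
have Z3 : z (inord 3) = (0%N, p).
  have [i Hi] := (H _).1 I3.
  move: Hi; have [->|[->|[->|->]]] := ord4 i; move=> Hi //; rewrite Hi /= in ord01 ord12 ord23 *; lia.
have Z2 : z (inord 2) = (1%N, (p - binv)%N).
  have [i Hi] := (H _).1 I2.
  move: Hi; have [->|[->|[->|->]]] := ord4 i; move=> Hi //; rewrite ?Z0 ?Z3 in Hi;
    try by case: Hi; lia.
  rewrite Hi Z3 /= in ord12 ord23; lia.
have Z1 : z (inord 1) = ((p - b)%N, 1%N).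
  have [i Hi] := (H _).1 I1.
  move: Hi; have [->|[->|[->|->]]] := ord4 i; move=> Hi //; rewrite ?Z0 ?Z3 in Hi;
    try by case: Hi; lia.
  exfalso; rewrite Z2 in Hi; case: Hi => Hu Hv.
  have := inz (inord 1); rewrite Z0 Z2 /= in ord01 ord12.
  case: (z (inord 1)) ord01 ord12 => c d /= o1 o2 Hin.
  have d0 : (0 < d)%N.
    case: d Hin => // Hin; have := nc2 Hin.1 erefl; rewrite /=; lia.
  apply: (@notinv p b (c, d) (1%N, 1%N) ((c - 1)%N, (d - 1)%N) _ _ _ Hin).
  - split; first by case.
    by rewrite /inv_monomial /= muln1; apply/dvdnP; exists 1%N; lia.
  - split; first by case; lia.
    move: Hin => [[_ Hi] _]; move: Hi; rewrite /inv_monomial /=.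
    have bd := leq_pmulr b d0.
    have -> : (c + b * d = (c - 1 + b * (d - 1)) + p)%N by rewrite mulnBr muln1; lia.
    by rewrite dvdn_addl.
  - rewrite /=; congr pair; lia.
split; first by [].
rewrite Z1 Z2 /= in ord01 ord12.
have v2 : (2 <= p - binv)%N.
  have := inz (inord 2); rewrite Z2 => -[[_ Hi] _].
  move: Hi; rewrite /inv_monomial /=.
  case E: (p - binv)%N => [|[|v]] //; first lia.
  rewrite muln1 => /dvdn_leq; lia.
have Hm : nc_inv_monomial p b ((p + 1 - (p - b))%N, (p - binv - 1)%N).
  split; first by case; lia.
  rewrite /inv_monomial /=; apply/dvdnP; exists (b - k)%N.
  have le1 : (b * (binv + 1) <= b * p)%N by rewrite leq_mul2l; apply/orP; right; lia.
  rewrite mulnDr muln1 in le1.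
  rewrite !mulnBr mulnBl muln1; lia.
have [[|k0] [k1 [k2 [k3 E]]]] := @gen p b z H (2 * p)%N ((p + 1 - (p - b))%N, (p - binv - 1)%N) ltac:(rewrite /=; lia) Hm;
  rewrite Z0 Z1 Z2 Z3 /= in E; case: E => E1 E2;
  apply: (arith1 _ _ _ _ _ _ _ ord12 v2 _ _ E1 E2); lia.
Qed.

Definition normal (t : nat * nat * nat * nat) : bool :=
  let: (a, b, c, d) := t in
  ~~ ((0 < a) && (0 < c))%N && ~~ ((0 < b) && (0 < d))%N && ~~ ((0 < a) && (0 < d))%N.

Definition Y (K : comRingType) (a b c d : nat) : {mpoly K[4]} :=
  yv K 0 ^+ a * yv K 1 ^+ b * yv K 2 ^+ c * yv K 3 ^+ d.

Definition inI (K : comRingType) (u v : nat) (g : {mpoly K[4]}) :=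
  exists a1 a2 a3 : {mpoly K[4]},
    g = a1 * (yv K 1 ^+ v - yv K 0 * yv K 2)
      + a2 * (yv K 2 ^+ u - yv K 1 * yv K 3)
      + a3 * (yv K 1 ^+ (v - 1) * yv K 2 ^+ (u - 1) - yv K 0 * yv K 3).

Lemma inI0 {K u v} : inI K u v 0.
Proof. by exists 0, 0, 0; rewrite !mul0r !addr0. Qed.

Lemma inID {K u v g h} : inI K u v g -> inI K u v h -> inI K u v (g + h).
Proof.
move=> [a1 [a2 [a3 ->]]] [c1 [c2 [c3 ->]]].
exists (a1 + c1), (a2 + c2), (a3 + c3); ring.
Qed.

Lemma inIM {K u v g} h : inI K u v g -> inI K u v (h * g).
Proof.
move=> [a1 [a2 [a3 ->]]].
exists (h * a1), (h * a2), (h * a3); ring.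
Qed.

Lemma inI_trans {K u v f g h} : inI K u v (f - g) -> inI K u v (g - h) -> inI K u v (f - h).
Proof. move=> H1 H2; have := inID H1 H2; by rewrite addrA subrK. Qed.

Lemma XE (K : comRingType) (m : 'X_{1..4}) :
  'X_[m] = Y K (m (inord 0)) (m (inord 1)) (m (inord 2)) (m (inord 3)).
Proof.
rewrite mpolyXE_id !big_ord_recl big_ord0 mulr1 /Y /yv !mulrA.
have E (i j : 'I_4) : val i = val j -> ('X_i : {mpoly K[4]}) ^+ m i = 'X_j ^+ m j.
  by move=> /val_inj ->.
by congr (_ * _ * _ * _); apply: E; rewrite /= inordK.
Qed.

Lemma phiE (K : comRingType) z (f : {mpoly K[4]}) :
  phi z f = mmap (@mpolyC 2 K) (fun i => monoS K (z i)) f.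
Proof. by []. Qed.

Lemma phi_yv (K : comRingType) z (i : nat) : (i < 4)%N -> phi z (yv K i) = monoS K (z (inord i)).
Proof. by move=> _; rewrite phiE /yv mmapX mmap1U. Qed.

Lemma phiM (K : comRingType) z (f g : {mpoly K[4]}) : phi z (f * g) = phi z f * phi z g.
Proof. by rewrite !phiE rmorphM. Qed.

Lemma phiXn (K : comRingType) z (f : {mpoly K[4]}) k : phi z (f ^+ k) = phi z f ^+ k.
Proof. by rewrite !phiE rmorphXn. Qed.

Lemma phiD (K : comRingType) z (f g : {mpoly K[4]}) : phi z (f + g) = phi z f + phi z g.
Proof. by rewrite !phiE rmorphD. Qed.

Lemma phiB (K : comRingType) z (f g : {mpoly K[4]}) : phi z (f - g) = phi z f - phi z g.
Proof. by rewrite !phiE rmorphB. Qed.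

Definition img2 (e1 e2 : nat) : 'X_{1..2} := (U_(inord 0) *+ e1 + U_(inord 1) *+ e2)%MM.

Lemma img2E0 e1 e2 : img2 e1 e2 (inord 0) = e1.
Proof.
have ne : (inord 1 == inord 0 :> 'I_2) = false by rewrite -val_eqE /= !inordK.
by rewrite /img2 mnmDE !mulmnE !mnm1E eqxx ne mul1n mul0n addn0.
Qed.

Lemma img2E1 e1 e2 : img2 e1 e2 (inord 1) = e2.
Proof.
have ne : (inord 0 == inord 1 :> 'I_2) = false by rewrite -val_eqE /= !inordK.
by rewrite /img2 mnmDE !mulmnE !mnm1E eqxx ne mul1n mul0n add0n.
Qed.

Lemma img2_inj a b c d : img2 a b = img2 c d -> a = c /\ b = d.
Proof. by move=> E; split; [rewrite -(img2E0 a b) E img2E0 | rewrite -(img2E1 a b) E img2E1]. Qed.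

Lemma img2D a b c d : (img2 a b + img2 c d)%MM = img2 (a + c) (b + d).
Proof.
apply/mnmP => j; rewrite /img2 !mnmDE !mulmnE !mnm1E.
case: (_ == j); case: (_ == j); rewrite ?mul1n ?mul0n; lia.
Qed.

Lemma img2M a b k : (img2 a b *+ k)%MM = img2 (a * k) (b * k).
Proof.
apply/mnmP => j; rewrite /img2 !mulmnE !mnmDE !mulmnE !mnm1E.
case: (_ == j); case: (_ == j); rewrite ?mul1n ?mul0n; lia.
Qed.

Lemma monoS_img (K : comRingType) x y : monoS K (x, y) = 'X_[img2 x y].
Proof. by rewrite /monoS /img2 mpolyXD !mpolyXn. Qed.

Lemma phiY (K : comRingType) p u v (z : 'I_4 -> nat * nat) :
  z (inord 0) = (p, 0%N) -> z (inord 1) = (u, 1%N) -> z (inord 2) = (1%N, v) -> z (inord 3) = (0%N, p) ->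
  forall a b c d, phi z (Y K a b c d) = 'X_[img2 (p * a + u * b + c) (b + v * c + p * d)].
Proof.
move=> Z0 Z1 Z2 Z3 a b c d.
rewrite /Y !phiM !phiXn !phi_yv // Z0 Z1 Z2 Z3 !monoS_img !mpolyXn -!mpolyXD.
rewrite !img2M !img2D; congr 'X_[img2 _ _]; lia.
Qed.
Lemma reduce K u v : (1 <= u)%N -> (1 <= v)%N -> forall n a b c d, (a + d <= n)%N ->
  exists a' b' c' d', normal (a', b', c', d') /\ inI K u v (Y K a b c d - Y K a' b' c' d').
Proof.
move=> u1 v1; elim=> [|n IH] a b c d Hn.
  exists a, b, c, d; split; last by rewrite subrr; apply: inI0.
  have -> : a = 0%N by lia. have -> : d = 0%N by lia.
  by rewrite /= !andbF.
case: (boolP ((0 < a) && (0 < c))%N) => [/andP [Ha Hc]|H1].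
  case: a Ha Hn => // a _ Hn; case: c Hc => // c _.
  have [a2 [b2 [c2 [d2 [N2 I2]]]]] := IH a (b + v)%N c d ltac:(lia).
  exists a2, b2, c2, d2; split => //; apply: inI_trans I2.
  exists (- Y K a b c d), 0, 0; rewrite /Y !exprS exprD; ring.
case: (boolP ((0 < b) && (0 < d))%N) => [/andP [Hb Hd]|H2].
  case: b Hb H1 => // b _ _; case: d Hd Hn => // d _ Hn.
  have [a2 [b2 [c2 [d2 [N2 I2]]]]] := IH a b (c + u)%N d ltac:(lia).
  exists a2, b2, c2, d2; split => //; apply: inI_trans I2.
  exists 0, (- Y K a b c d), 0; rewrite /Y !exprS exprD; ring.
case: (boolP ((0 < a) && (0 < d))%N) => [/andP [Ha Hd]|H3].
  case: a Ha Hn H1 => // a _ Hn _; case: d Hd Hn H2 => // d _ Hn _.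
  have [a2 [b2 [c2 [d2 [N2 I2]]]]] := IH a (b + (v - 1))%N (c + (u - 1))%N d ltac:(lia).
  exists a2, b2, c2, d2; split => //; apply: inI_trans I2.
  exists 0, 0, (- Y K a b c d); rewrite /Y !exprS !exprD; ring.
exists a, b, c, d; split; last by rewrite subrr; apply: inI0.
by rewrite /normal H1 H2 H3.
Qed.

Lemma Ymnm (K : comRingType) a b c d :
  Y K a b c d = 'X_[[multinom (nth 0%N [:: a; b; c; d] i) | i < 4]].
Proof. by rewrite XE !mnmE !inordK. Qed.

Definition nrm (m : 'X_{1..4}) := normal (m (inord 0), m (inord 1), m (inord 2), m (inord 3)).

Lemma nf_poly (K : comRingType) u v : (1 <= u)%N -> (1 <= v)%N -> forall f : {mpoly K[4]},
  exists g, (forall m, m \in msupp g -> nrm m) /\ inI K u v (f - g).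
Proof.
move=> u1 v1; elim/mpolyind => [|c m f _ _ [g [Hg Ig]]].
  by exists 0; split; [move=> m; rewrite msupp0 | rewrite subrr; apply: inI0].
have [a' [b' [c' [d' [N I]]]]] := @reduce K u v u1 v1 (m (inord 0) + m (inord 3))%N (m (inord 0)) (m (inord 1)) (m (inord 2)) (m (inord 3)) (leqnn _).
rewrite -XE Ymnm in I.
set n := [multinom _ | i < 4] in I.
exists (c *: 'X_[n] + g); split.
  move=> k /msuppD_le; rewrite mem_cat => /orP [/msuppZ_le|/Hg //].
  rewrite msuppX inE => /eqP ->.
  by rewrite /nrm /n !mnmE !inordK.
have -> : c *: 'X_[m] + f - (c *: 'X_[n] + g) = c%:MP * ('X_[m] - 'X_[n]) + (f - g).
  by rewrite !mul_mpolyC scalerBr; ring.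
by apply: inID => //; apply: inIM.
Qed.
Lemma inj_normal p u v a b c d a' b' c' d' : (1 < u)%N -> (1 < v)%N -> (u * v = p + 1)%N ->
  normal (a, b, c, d) -> normal (a', b', c', d') ->
  (p * a + u * b + c = p * a' + u * b' + c')%N ->
  (b + v * c + p * d = b' + v * c' + p * d')%N ->
  (a, b, c, d) = (a', b', c', d').
Proof.
move=> u1 v1 uv /= N1 N2 E1 E2.
have uvc x : (u * (v * x) = p * x + x)%N by rewrite mulnA uv mulnDl mul1n.
have vuc x : (v * (u * x) = p * x + x)%N by rewrite mulnA [(v * u)%N]mulnC uv mulnDl mul1n.
have p0 : (0 < p)%N by nia.
have R1 : (c + u * d + a' = c' + u * d' + a)%N.
  apply/eqP; rewrite -(eqn_pmul2l p0); apply/eqP.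
  have h := congr1 (muln u) E2; rewrite !mulnDr !uvc in h.
  rewrite !mulnDr; nia.
have R2 : (v * a + b + d' = v * a' + b' + d)%N.
  apply/eqP; rewrite -(eqn_pmul2l p0); apply/eqP.
  have h := congr1 (muln v) E1; rewrite !mulnDr !vuc in h.
  rewrite !mulnDr; nia.
clear E1 E2 uvc vuc; move: N1 N2; rewrite /normal.
case: a R1 R2 => [|a] R1 R2; case: a' R1 R2 => [|a'] R1 R2;
case: d R1 R2 => [|d] R1 R2; case: d' R1 R2 => [|d'] R1 R2;
case: c R1 R2 => [|c] R1 R2; case: c' R1 R2 => [|c'] R1 R2;
case: b R1 R2 => [|b] R1 R2; case: b' R1 R2 => [|b'] R1 R2 => //= N1 N2; try nia.
all: congr (_, _, _, _); nia.
Qed.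

Lemma phi_I (K : comRingType) p u v (z : 'I_4 -> nat * nat) :
  z (inord 0) = (p, 0%N) -> z (inord 1) = (u, 1%N) -> z (inord 2) = (1%N, v) -> z (inord 3) = (0%N, p) ->
  (u * v = p + 1)%N -> (1 <= u)%N -> (1 <= v)%N ->
  forall g, inI K u v g -> phi z g = 0.
Proof.
move=> Z0 Z1 Z2 Z3 uv u1 v1 g [a1 [a2 [a3 ->]]].
rewrite (_ : yv K 1 ^+ v - yv K 0 * yv K 2 = Y K 0 v 0 0 - Y K 1 0 1 0); last by rewrite /Y; ring.
rewrite (_ : yv K 2 ^+ u - yv K 1 * yv K 3 = Y K 0 0 u 0 - Y K 0 1 0 1); last by rewrite /Y; ring.
rewrite (_ : yv K 1 ^+ (v - 1) * yv K 2 ^+ (u - 1) - yv K 0 * yv K 3 = Y K 0 (v - 1) (u - 1) 0 - Y K 1 0 0 1); last by rewrite /Y; ring.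
rewrite !phiD !phiM !phiB !(@phiY K p u v z Z0 Z1 Z2 Z3).
have e1 : img2 (p * 0 + u * v + 0) (v + v * 0 + p * 0) = img2 (p * 1 + u * 0 + 1) (0 + v * 1 + p * 0).
  by congr img2; lia.
have e2 : img2 (p * 0 + u * 0 + u) (0 + v * u + p * 0) = img2 (p * 0 + u * 1 + 0) (1 + v * 0 + p * 1).
  by congr img2; rewrite mulnC; lia.
have e3 : img2 (p * 0 + u * (v - 1) + (u - 1)) (v - 1 + v * (u - 1) + p * 0) = img2 (p * 1 + u * 0 + 0) (0 + v * 0 + p * 1).
  have h1 := leq_pmulr u v1; have h2 := leq_pmull v u1.
  by congr img2; rewrite !mulnBr !muln1 ?[(v * u)%N]mulnC; lia.
by rewrite e1 e2 e3 !subrr !mulr0 !addr0.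
Qed.

Lemma mnm_eq4 (m m' : 'X_{1..4}) :
  (m (inord 0), m (inord 1), m (inord 2), m (inord 3)) = (m' (inord 0), m' (inord 1), m' (inord 2), m' (inord 3)) ->
  m = m'.
Proof.
case=> e0 e1 e2 e3; apply/mnmP => i.
by have [->|[->|[->|->]]] := ord4 i.
Qed.

Lemma phi_coef (K : comRingType) p u v (z : 'I_4 -> nat * nat) :
  z (inord 0) = (p, 0%N) -> z (inord 1) = (u, 1%N) -> z (inord 2) = (1%N, v) -> z (inord 3) = (0%N, p) ->
  (u * v = p + 1)%N -> (1 < u)%N -> (1 < v)%N ->
  forall g : {mpoly K[4]}, (forall m, m \in msupp g -> nrm m) -> phi z g = 0 -> g = 0.
Proof.
move=> Z0 Z1 Z2 Z3 uv u1 v1 g Hg H0.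
pose im (m : 'X_{1..4}) := img2 (p * m (inord 0) + u * m (inord 1) + m (inord 2))
                               (m (inord 1) + v * m (inord 2) + p * m (inord 3)).
have img m : phi z ('X_[m] : {mpoly K[4]}) = 'X_[im m] by rewrite XE (@phiY K p u v z Z0 Z1 Z2 Z3).
have E : phi z g = \sum_(m <- msupp g) g@_m *: 'X_[im m].
  rewrite phiE /mmap; apply: eq_bigr => m _; rewrite mul_mpolyC; congr (_ *: _).
  by rewrite -img phiE mmapX.
apply/mpolyP => m0; rewrite mcoeff0.
case: (boolP (m0 \in msupp g)) => Hm; last by apply: memN_msupp_eq0.
have := congr1 (mcoeff (im m0)) H0; rewrite E mcoeff0 raddf_sum (bigD1_seq m0) ?msupp_uniq //=.
rewrite big1_seq ?mcoeffZ ?mcoeffX ?eqxx ?mulr1 ?addr0 //.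
move=> m /andP [Hne Hin]; rewrite mcoeffZ mcoeffX.
case: eqP => [Eim|]; last by rewrite mulr0.
exfalso; move/eqP: Hne; apply; apply: mnm_eq4.
have [E1 E2] := @img2_inj _ _ _ _ Eim.
exact: (@inj_normal p u v _ _ _ _ _ _ _ _ u1 v1 uv (Hg _ Hin) (Hg _ Hm) E1 E2).
Qed.

Theorem proposition4p2 (R : realType) (p b binv : nat) (z : 'I_4 -> nat * nat) :
  prime p -> (0 < b < p)%N ->
  (* binv = b^{-1}: the unique integer 0 < binv < p with b * binv = 1 mod p *)
  (0 < binv < p)%N -> (b * binv = 1 %[mod p])%N ->
  (* inv_{1,b} = {z_0, z_1, z_2, z_3}, listed in decreasing order of the x1-exponent *)
  (forall m : nat * nat, in_inv_1b p b m <-> exists i, z i = m) ->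
  (forall i j : 'I_4, (i < j)%N -> ((z j).1 < (z i).1)%N) ->
  forall f : {mpoly R[i][4]},
    phi z f = 0 <->
    exists a1 a2 a3 : {mpoly R[i][4]},
      f = a1 * (yv _ 1 ^+ (p - binv) - yv _ 0 * yv _ 2)
        + a2 * (yv _ 2 ^+ (p - b) - yv _ 1 * yv _ 3)
        + a3 * (yv _ 1 ^+ (p - binv - 1) * yv _ 2 ^+ (p - b - 1) - yv _ 0 * yv _ 3).
Proof.
move=> pp Hb Hbi Hmod H Hord f.
have [[Z0 Z1 Z2 Z3] uv] := @structure p b binv z pp Hb Hbi Hmod H Hord.
have u1 : (1 < p - b)%N.
  rewrite ltnNge; apply/negP => hu; have := leq_mul hu (leqnn (p - binv)); rewrite mul1n uv; lia.
have v1 : (1 < p - binv)%N.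
  rewrite ltnNge; apply/negP => hv; have := leq_mul (leqnn (p - b)) hv; rewrite muln1 uv; lia.
change (phi z f = 0 <-> inI _ (p - b) (p - binv) f).
split; last exact: (@phi_I _ p (p - b) (p - binv) z Z0 Z1 Z2 Z3 uv (ltnW u1) (ltnW v1)).
move=> H0.
have [g [Hg Ig]] := @nf_poly _ (p - b) (p - binv) (ltnW u1) (ltnW v1) f.
have := @phi_I _ p (p - b) (p - binv) z Z0 Z1 Z2 Z3 uv (ltnW u1) (ltnW v1) _ Ig.
rewrite phiB H0 sub0r => /eqP; rewrite oppr_eq0 => /eqP Hg0.
have g0 := @phi_coef _ p (p - b) (p - binv) z Z0 Z1 Z2 Z3 uv u1 v1 g Hg Hg0.
by rewrite g0 subr0 in Ig.
Qed.
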